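(* Let $b>1$, let $(p,R,I)$ be proper with $I$ non-empty, and let $k$ be the greatest divisor of $p$ coprime with $b$. Then the $0$-circuits of the minimisation of $\mathcal{C}_{R,p,I}$ have a total of $k+1$ states.
   Context: $A_b=\{0,\ldots,b-1\}$. Given $p\ge1$, $R\subseteq\{0,\ldots,p-1\}$, finite $I\subseteq\mathbb{N}$, let $S=(R+p\mathbb{N})\oplus I$ ($\oplus$ = symmetric difference). $(p,R,I)$ is proper if $p$ is the smallest positive integer for which $S=(R'+p\mathbb{N})\oplus I'$ for some $R'\subseteq\{0,\ldots,p-1\}$ and finite $I'$. $\mathcal{A}_{R,p}$: states $\{0,\ldots,p-1\}$, initial $0$, final $R$, transitions $n\xrightarrow{a}(nb+a)\bmod p$. With $m=\max I$, $\mathcal{B}_I$: states $\{0,\ldots,m\}\cup\{\bot\}$, initial $0$, final $I$, transitions $i\xrightarrow{a}ib+a$ if $ib+a\le m$, else $i\xrightarrow{a}\bot$, and $\bot\xrightarrow{a}\bot$. $\mathcal{C}_{R,p,I}$ is the accessible part of the product of $\mathcal{A}_{R,p}$ and $\mathcal{B}_I$ (initial state $(0,0)$, componentwise transitions), with $(s,t)$ final iff exactly one of $s\in R$, $t\in I$ holds. The minimisation is the complete deterministic automaton with fewest states accepting the same language. A $0$-circuit is a circuit all of whose transitions are labelled $0$. *)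

(* Defs.v *)
From mathcomp Require Import all_boot.
Set Implicit Arguments. Unset Strict Implicit. Unset Printing Implicit Defensive.

(* Finite sets of naturals are represented by sequences (duplicates harmless). *)

Definition in_RpN (p : nat) (R : seq nat) (n : nat) : Prop :=
  exists r j, r \in R /\ n = r + p * j.

Definition inS (p : nat) (R I : seq nat) (n : nat) : Prop :=
  (in_RpN p R n /\ n \notin I) \/ (~ in_RpN p R n /\ n \in I).

Definition proper_triple (p : nat) (R I : seq nat) : Prop :=
  0 < p /\ all (fun r => r < p) R /\
  forall p', 0 < p' ->
    (exists R' I' : seq nat, all (fun r => r < p') R' /\
        forall n, inS p R I n <-> inS p' R' I' n) ->
    p <= p'.

Record dfa (b : nat) := Dfa {
  dstate : finType;
  dinit : dstate;
  ddelta : dstate -> 'I_b -> dstate;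
  dfinal : pred dstate }.

Definition drun b (M : dfa b) (w : seq 'I_b) : dstate M :=
  foldl (@ddelta b M) (@dinit b M) w.

Definition daccepts b (M : dfa b) (w : seq 'I_b) : bool := @dfinal b M (drun M w).

(* The product automaton C_{R,p,I}: states (s,t) with s in {0..p-1} (A_{R,p})
   and t in {0..m} u {bot} (B_I, bot encoded as None).  We only use it through
   its language, which is the same as the language of its accessible part. *)
Definition stepA (b p : nat) (s : nat) (a : nat) : nat := (s * b + a) %% p.

Definition stepB (b m : nat) (t : option nat) (a : nat) : option nat :=
  match t with
  | Some i => if i * b + a <= m then Some (i * b + a) else None
  | None => None
  end.

Definition stepC (b p m : nat) (st : nat * option nat) (a : 'I_b)
  : nat * option nat :=
  (stepA b p st.1 a, stepB b m st.2 a).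

Definition finalC (R I : seq nat) (st : nat * option nat) : bool :=
  (st.1 \in R) (+) (match st.2 with Some t => t \in I | None => false end).

Definition langC (b p : nat) (R I : seq nat) (w : seq 'I_b) : bool :=
  finalC R I (foldl (@stepC b p (\max_(i <- I) i)) (0, Some 0) w).

Definition is_minimisation b (L : seq 'I_b -> bool) (M : dfa b) : Prop :=
  (forall w, daccepts M w = L w) /\
  (forall M' : dfa b, (forall w, daccepts M' w = L w) ->
     #|@dstate b M| <= #|@dstate b M'|).

Definition on_zero_circuit b (M : dfa b) (q : dstate M) : Prop :=
  exists (z : 'I_b) (n : nat), nat_of_ord z = 0 /\ 0 < n /\
    iter n (fun x => @ddelta b M x z) q = q.

(* Main.v *)
Require Import Defs.
From mathcomp Require Import all_boot cyclic zify.
From Stdlib Require Import Classical ClassicalEpsilon.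
Set Implicit Arguments. Unset Strict Implicit. Unset Printing Implicit Defensive.

Definition decP (P : Prop) : bool := if excluded_middle_informative P then true else false.
Lemma decPP P : reflect P (decP P).
Proof. rewrite /decP; case: excluded_middle_informative => h; constructor; done. Qed.
Lemma decP_iff P Q : (P <-> Q) -> decP P = decP Q.
Proof. by move=> h; case: decPP => hp; case: decPP => hq //; exfalso; tauto. Qed.

Definition runf b (M : dfa b) (q : dstate M) (v : seq 'I_b) := foldl (@ddelta b M) q v.
Definition sequiv b (M : dfa b) (q q' : dstate M) : Prop :=
  forall v, dfinal (runf q v) = dfinal (runf q' v).
Definition reach b (M : dfa b) (q : dstate M) : bool := decP (exists w, drun M w = q).
Definition canon b (M : dfa b) (q : dstate M) : dstate M :=
  odflt q [pick q' : dstate M | reach q' && decP (sequiv q q')].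

Lemma canon_eq b (M : dfa b) (q q' : dstate M) : reach q -> sequiv q q' -> canon q = canon q'.
Proof.
move=> hq h; rewrite /canon.
rewrite (@eq_pick _ _ (fun x => reach x && decP (sequiv q' x))).
  have hs : sequiv q' q by move=> v; rewrite h.
  by case: pickP => [x _|H] //; move: (H q); rewrite hq /=; case: decPP.
move=> x /=; congr andb.
apply: decP_iff; split => h1 v; by rewrite -h1 h.
Qed.

Lemma canon_spec b (M : dfa b) (q : dstate M) : reach q -> reach (canon q) /\ sequiv q (canon q).
Proof.
move=> hq; rewrite /canon; case: pickP => [x /andP[hx /decPP hx2] | H] //=.
Qed.

Lemma reach_delta b (M : dfa b) (q : dstate M) a : reach q -> reach (ddelta q a).
Proof.
move/decPP=> [w hw]; apply/decPP; exists (rcons w a); by rewrite /drun foldl_rcons -/(drun M w) hw.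
Qed.

Lemma reach_init b (M : dfa b) : reach (dinit M).
Proof. by apply/decPP; exists [::]. Qed.

Definition good b (M : dfa b) (q : dstate M) : bool := reach q && (canon q == q).

Lemma good_canon b (M : dfa b) (q : dstate M) : reach q -> good (canon q).
Proof.
move=> hq; have [h1 h2] := canon_spec hq; rewrite /good h1 /=.
apply/eqP; apply: canon_eq => // v; by rewrite h2.
Qed.

Lemma good_reach b (M : dfa b) (q : dstate M) : good q -> reach q.
Proof. by case/andP. Qed.

Definition Mq b (M : dfa b) : dfa b :=
  @Dfa b {q : dstate M | good q}
    (exist _ (canon (dinit M)) (good_canon (reach_init M)))
    (fun q a => exist _ (canon (ddelta (val q) a)) (good_canon (reach_delta a (good_reach (valP q)))))
    (fun q => dfinal (val q)).

Lemma drun_rcons b (M : dfa b) w a : drun M (rcons w a) = ddelta (drun M w) a.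
Proof. by rewrite /drun foldl_rcons. Qed.

Lemma reach_drun b (M : dfa b) w : reach (drun M w).
Proof. by apply/decPP; exists w. Qed.

Lemma run_Mq b (M : dfa b) w : val (drun (Mq M) w) = canon (drun M w).
Proof.
elim/last_ind: w => [|w a IH] //.
rewrite !drun_rcons /= IH.
have [hr h] := canon_spec (reach_drun M w).
apply: canon_eq; first exact: reach_delta. move=> v.
by rewrite /runf /= -!/(runf _ (_ :: _)) (h (a :: v)).
Qed.

Lemma min_good b (L : seq 'I_b -> bool) (M : dfa b) :
  is_minimisation L M -> forall q : dstate M, good q.
Proof.
move=> [hacc hmin].
have hacc' : forall w, daccepts (Mq M) w = L w.
  move=> w; rewrite -hacc /daccepts /= run_Mq.
  have [_ h] := canon_spec (reach_drun M w); by rewrite (h [::]).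
have := hmin _ hacc'; rewrite /= card_sig => hle q.
apply/negPn/negP => hq.
have : #|[pred x : dstate M | good x]| < #|dstate M|.
  rewrite -(cardC [pred x : dstate M | good x]) -addn1 leq_add2l.
  by apply/card_gt0P; exists q; rewrite !inE.
by rewrite ltnNge hle.
Qed.

Lemma min_reach b (L : seq 'I_b -> bool) (M : dfa b) :
  is_minimisation L M -> forall q, exists w, drun M w = q.
Proof. move=> h q; apply/decPP; exact: good_reach (min_good h q). Qed.

Lemma min_inj b (L : seq 'I_b -> bool) (M : dfa b) :
  is_minimisation L M -> forall w w', (forall v, L (w ++ v) = L (w' ++ v)) ->
  drun M w = drun M w'.
Proof.
move=> h w w' hv.
have hs : sequiv (drun M w) (drun M w').
  move=> v; have := hv v; rewrite -!h.1 /daccepts /drun !foldl_cat //.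
have := min_good h (drun M w); have := min_good h (drun M w').
rewrite /good => /andP[_ /eqP <-] /andP[_ /eqP <-]; by rewrite (canon_eq (reach_drun M w) hs).
Qed.
Lemma part_facts b p k : 1 < b -> 0 < p -> k %| p -> coprime k b ->
  (forall d, d %| p -> coprime d b -> d <= k) ->
  p = p`_\pi(b) * k /\ p`_\pi(b) %| b ^ p.
Proof.
move=> hb hp hkp hkb hmax.
set g := p`_\pi(b); set u := p`_(\pi(b))^'.
have hgu : g * u = p by rewrite /g /u partnC.
have hg0 : 0 < g by rewrite part_gt0.
have hgb : g %| b ^ p.
  apply/(dvdn_partP _ hg0) => q hq.
  have hqb : q \in \pi(b) := pnatPpi (part_pnat _ _) hq.
  have : q %| b by move: hqb; rewrite /pi_of mem_primes => /and3P[].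
  move=> hqb'; rewrite p_part.
  apply: dvdn_trans (dvdn_exp2r _ hqb') (dvdn_exp2l _ _).
  apply: ltnW; apply: leq_trans (ltn_logl _ hg0) _.
  apply: dvdn_leq => //; exact: dvdn_part.
split=> //.
have hub : coprime u b.
  apply: (pnat_coprime (part_pnat _ _)).
  rewrite pnatNK; apply: pnat_pi; lia.
have hu0 : 0 < u by rewrite part_gt0.
have hup : u %| p by rewrite -hgu dvdn_mull.
have h1 := hmax u hup hub.
have hkg : coprime k g.
  apply: coprime_dvdr hgb _; exact: coprimeXr.
have h2 : k %| u by rewrite -(Gauss_dvdr _ hkg) hgu.
have := dvdn_leq hu0 h2 => h3.
have -> : k = u by apply/eqP; rewrite eqn_leq h1 h3.
by rewrite hgu.
Qed.

Definition wval b (w : seq 'I_b) : nat := foldl (fun x (a : 'I_b) => x * b + a) 0 w.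

Lemma foldl_wval b x0 (w : seq 'I_b) :
  foldl (fun x (a : 'I_b) => x * b + a) x0 w = x0 * b ^ size w + wval w.
Proof.
elim: w x0 => [|a w IH] x0 /=; first by rewrite muln1 addn0.
rewrite /wval /= !IH expnS; nia.
Qed.

Lemma wval_cat b (w v : seq 'I_b) : wval (w ++ v) = wval w * b ^ size v + wval v.
Proof. by rewrite /wval foldl_cat foldl_wval. Qed.

Lemma wval_rcons b (w : seq 'I_b) a : wval (rcons w a) = wval w * b + a.
Proof. by rewrite /wval foldl_rcons. Qed.

Lemma wval_nseq0 b n (z : 'I_b) : nat_of_ord z = 0 -> wval (nseq n z) = 0.
Proof.
move=> hz; elim: n => [|n IH] //.
by rewrite [wval _]/wval /= foldl_wval IH hz.
Qed.

Definition dig b (hb : 0 < b) y : 'I_b := Ordinal (ltn_pmod y hb).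
Fixpoint digsN b (hb : 0 < b) l y : seq 'I_b :=
  if l is l'.+1 then rcons (digsN hb l' (y %/ b)) (dig hb y) else [::].

Lemma size_digsN b (hb : 0 < b) l y : size (digsN hb l y) = l.
Proof. by elim: l y => [|l IH] y //=; rewrite size_rcons IH. Qed.

Lemma wval_digsN b (hb : 0 < b) l y : y < b ^ l -> wval (digsN hb l y) = y.
Proof.
elim: l y => [|l IH] y /=; first by rewrite expn0; case: y.
move=> hy; rewrite wval_rcons IH /=; first by rewrite -divn_eq.
by rewrite ltn_divLR // -expnSr.
Qed.

Lemma cw b p m (w : seq 'I_b) :
  foldl (@stepC b p m) (0, Some 0) w =
  (wval w %% p, if wval w <= m then Some (wval w) else None).
Proof.
elim/last_ind: w => [|w a IH]; first by rewrite /= mod0n.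
rewrite foldl_rcons IH wval_rcons /stepC /stepA /=.
congr pair; first by rewrite -modnDml modnMml modnDml.

case: ifP => h /=; first by [].
case: ifP => // h2; exfalso.
have : wval w <= wval w * b + a.
  case: b a w IH h h2 => [|b'] a; first by case: a.
  move=> *; nia.
lia.
Qed.

Definition Fv p (R I : seq nat) x := (x %% p \in R) (+) (x \in I).

Lemma langC_F b p R I (w : seq 'I_b) : @langC b p R I w = Fv p R I (wval w).
Proof.
rewrite /langC cw /finalC /Fv /=.
case: ifP => // h; case hI: (wval w \in I) => //.
by have := @leq_bigmax_seq _ I xpredT (fun i => i) (wval w) hI isT; rewrite h.
Qed.
Lemma in_RpN_mod q R0 n : 0 < q -> all (fun r => r < q) R0 ->
  in_RpN q R0 n <-> n %% q \in R0.
Proof.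
move=> hq hR; split.
  move=> [r [j [hr ->]]].
  have hrq : r < q by move/allP: hR => /(_ r hr).
  by rewrite mulnC addnC modnMDl modn_small.
move=> h; exists (n %% q), (n %/ q); split => //.
by rewrite addnC mulnC -divn_eq.
Qed.

Lemma modP_add p y c : p %| c -> (y + c) %% p = y %% p.
Proof. by move=> /dvdnP[t ->]; rewrite addnC modnMDl. Qed.

Lemma period_contra p R I d : proper_triple p R I -> 0 < d -> d < p ->
  (forall y, ((y + d) %% p \in R) = (y %% p \in R)) -> False.
Proof.
move=> [hp [hR hprop]] hd0 hdp hper.
set P := fun y => y %% p \in R.
have hit : forall a y, P (y + d * a) = P y.
  elim=> [|a IH] y; first by rewrite muln0 addn0.
  by rewrite mulnS addnCA addnC /P hper -/(P _) IH.
set g := gcdn d p.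
have hg0 : 0 < g by rewrite gcdn_gt0 hd0.
have hgd : g <= d by apply: dvdn_leq => //; exact: dvdn_gcdl.
have [a _ ha] := Bezoutl d hp.
have hg : forall y, P (y + g) = P y.
  move=> y; rewrite -(hit a (y + g)) /P -addnA modP_add //.
  by rewrite /g gcdnC mulnC.
have hgj : forall j y, P (y + g * j) = P y.
  elim=> [|j IH] y; first by rewrite muln0 addn0.
  by rewrite mulnS addnCA addnC hg IH.
have hPg : forall n, P n = P (n %% g).
  by move=> n; rewrite {1}(divn_eq n g) addnC mulnC hgj.
set R' := [seq r <- iota 0 g | P r].
have hR' : all (fun r => r < g) R'.
  apply/allP => r; rewrite mem_filter mem_iota => /andP[_ /andP[_ h]]; lia.
have := hprop g hg0; rewrite leqNgt (leq_ltn_trans hgd hdp) => /(_ _) H.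
suff : false by [].
apply: H; exists R', I; split => // n.
have e1 := in_RpN_mod n hp hR.
have e2 := in_RpN_mod n hg0 hR'.
have e3 : (n %% g \in R') = P n.
  by rewrite /R' mem_filter mem_iota add0n leq0n ltn_pmod // !andbT -hPg.
rewrite e3 in e2.
rewrite /inS; move: e1 e2; rewrite /P; tauto.
Qed.
Theorem proposition41 (b p : nat) (R I : seq nat) (k : nat) :
  1 < b ->
  proper_triple p R I ->
  I != [::] ->
  k %| p -> coprime k b ->
  (forall d, d %| p -> coprime d b -> d <= k) ->
  forall M : dfa b, is_minimisation (@langC b p R I) M ->
  exists X : {set dstate M},
    (forall q, q \in X <-> on_zero_circuit q) /\ #|X| = k.+1.
Proof.
move=> hb hprop hI hkp hkb hmax M hmin.
have hb0 : 0 < b by lia.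
have [hp [hR _]] := hprop.
set m := \max_(i <- I) i.
have hIm : forall i, i \in I -> i <= m :=
  fun i hi => @leq_bigmax_seq _ I xpredT (fun i => i) i hi isT.
set P := fun x => x %% p \in R.
have Fbig : forall x, m < x -> Fv p R I x = P x.
  move=> x hx; rewrite /Fv /P; case hxI: (x \in I); last by rewrite addbF.
  by have := hIm x hxI; lia.
have [hpk hgb] := part_facts hb hp hkp hkb hmax.
move: hpk hgb; set g := p`_\pi(b) => hpk hgb.
have hk0 : 0 < k.
  rewrite lt0n; apply/eqP => k0; move: hpk; rewrite k0 muln0 => e; by rewrite e in hp.
have hg0 : 0 < g.
  rewrite lt0n; apply/eqP => k0; move: hpk; rewrite k0 mul0n => e; by rewrite e in hp.
have L_eq : forall w v, @langC b p R I (w ++ v) = Fv p R I (wval w * b ^ size v + wval v).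
  by move=> w v; rewrite langC_F wval_cat.
have drun_eq : forall w w', (forall l y, Fv p R I (wval w * b ^ l + y) = Fv p R I (wval w' * b ^ l + y)) ->
    drun M w = drun M w'.
  move=> w w' h; apply: (min_inj hmin) => v; by rewrite !L_eq h.
have drun_val : forall w w', wval w = wval w' -> drun M w = drun M w'.
  by move=> w w' h; apply: drun_eq => l y; rewrite h.
have bigl : forall X l y, m < X -> m < X * b ^ l + y.
  move=> X l y hX; have : 0 < b ^ l by rewrite expn_gt0 hb0.
  nia.
have drun_big : forall w w', m < wval w -> m < wval w' -> wval w %% p = wval w' %% p ->
    drun M w = drun M w'.
  move=> w w' h1 h2 h3; apply: drun_eq => l y.
  rewrite !Fbig ?bigl // /P.
  by rewrite -modnDml -modnMml h3 modnMml modnDml.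
have res_of : forall w w', drun M w = drun M w' -> forall l y, y < b ^ l ->
    Fv p R I (wval w * b ^ l + y) = Fv p R I (wval w' * b ^ l + y).
  move=> w w' he l y hy.
  have := L_eq w (digsN hb0 l y); rewrite size_digsN wval_digsN // => <-.
  have := L_eq w' (digsN hb0 l y); rewrite size_digsN wval_digsN // => <-.
  by rewrite -!hmin.1 /daccepts /drun !foldl_cat -!/(drun M _) he.
have hmod : forall x l, totient k %| l -> g %| x -> (x * b ^ l) %% p = x %% p.
  move=> x l /dvdnP[j ->] /dvdnP[t ->].
  have hbk : b ^ (j * totient k) %% k = 1 %% k.
    have hbk' : coprime b k by rewrite coprime_sym.
    rewrite mulnC expnM -(modnXm j k (b ^ totient k)) (Euler_exp_totient hbk').
    by rewrite (modnXm j k 1) exp1n.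
  rewrite hpk (mulnC t g) -mulnA -!muln_modr; congr muln.
  by rewrite -modnMmr hbk modnMmr muln1.
have hshift : forall X l y, totient k %| l -> g %| X %% p -> (X * b ^ l + y) %% p = (X + y) %% p.
  move=> X l y hl hX.
  by rewrite -modnDml -modnMml hmod // modn_mod modnDml.
have hphi0 : 0 < totient k by rewrite totient_gt0.
pose z0 : 'I_b := Ordinal hb0.
pose Xw := fun t => t * g + p * m.+1.
pose wz := fun (z : 'I_k.+1) =>
  if nat_of_ord z is t.+1 then digsN hb0 (Xw t) (Xw t) else [::].
have wval_wz : forall t (ht : t.+1 < k.+1), wval (wz (Ordinal ht)) = Xw t.
  by move=> t ht; rewrite /wz /= wval_digsN // ltn_expl.
have Xw_big : forall t, m < Xw t by move=> t; rewrite /Xw; nia.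
have Xw_mod : forall t, t < k -> Xw t %% p = t * g.
  move=> t ht; have htg : t * g < p by rewrite hpk [g * k]mulnC ltn_pmul2r.
  by rewrite /Xw addnC (mulnC p) modnMDl modn_small.
have Xw_dvd : forall t, t < k -> g %| Xw t %% p.
  by move=> t ht; rewrite Xw_mod // dvdn_mull.
have drun_nseq : forall w n a, drun M (w ++ nseq n a) = iter n (fun x => ddelta x a) (drun M w).
  move=> w n a; rewrite /drun foldl_cat; elim: n (foldl _ _ w) => // n IH x /=.
  by rewrite IH -iterSr.
have [i0 hi0] : exists i, i \in I.
  by move: hI; case: (I) => // i s _; exists i; rewrite inE eqxx.
have contra0 : forall t (ht : t.+1 < k.+1), drun M [::] <> drun M (wz (Ordinal ht)).
  move=> t ht he.
  have hy : forall y, Fv p R I y = P (Xw t + y).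
    move=> y.
    have hl : y < b ^ (totient k * y.+1).
      apply: leq_trans (ltnW (ltn_expl _ hb)).
      by rewrite -{1}(mul1n y.+1) leq_mul2r hphi0 orbT.
    have := res_of _ _ he _ _ hl; rewrite wval_wz /= mul0n add0n => ->.
    by rewrite Fbig ?bigl // /P hshift ?dvdn_mulr ?Xw_dvd.
  have h1 := hy i0.
  have h2 := hy (i0 + p * m.+1).
  rewrite Fbig in h2; last by nia.
  move: h1 h2; rewrite /Fv hi0 /P addnA !(modP_add _ (dvdn_mulr _ (dvdnn p))).
  by case: (i0 %% p \in R); case: ((Xw t + i0) %% p \in R).
have contra2 : forall t1 t2 (h1 : t1.+1 < k.+1) (h2 : t2.+1 < k.+1), t1 < t2 ->
    drun M (wz (Ordinal h1)) <> drun M (wz (Ordinal h2)).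
  move=> t1 t2 h1 h2 h12 he.
  have hy : forall y, P (t1 * g + y) = P (t2 * g + y).
    move=> y.
    have hl : y < b ^ (totient k * y.+1).
      apply: leq_trans (ltnW (ltn_expl _ hb)).
      by rewrite -{1}(mul1n y.+1) leq_mul2r hphi0 orbT.
    have := res_of _ _ he _ _ hl; rewrite !wval_wz.
    rewrite !Fbig ?bigl // /P !hshift ?dvdn_mulr ?Xw_dvd //.
    by rewrite -modnDml Xw_mod // -[in X in _ = X -> _]modnDml Xw_mod.
  have hs1 : t1 * g < t2 * g by rewrite ltn_pmul2r.
  have hs2 : t2 * g < p by rewrite hpk mulnC ltn_pmul2l.
  have hd1 : 0 < t2 * g - t1 * g by lia.
  have hd2 : t2 * g - t1 * g < p by lia.
  apply: (period_contra hprop hd1 hd2).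
  move=> y.
  have e1 : ((y + (t2 * g - t1 * g)) %% p) = ((t2 * g + (y + p - t1 * g)) %% p).
    by rewrite -(modnDr (y + _) p); congr modn; lia.
  have e2 : y %% p = ((t1 * g + (y + p - t1 * g)) %% p).
    by rewrite -(modnDr y p); congr modn; lia.
  by rewrite e1 e2 -/(P _) -/(P _) hy.
pose X := [set drun M (wz z) | z : 'I_k.+1].
exists X; split; last first.
  rewrite card_imset ?card_ord //.
  move=> [z1 h1] [z2 h2] /= he; apply/val_inj => /=.
  move: h1 h2 he; case: z1 => [|t1] h1; case: z2 => [|t2] h2 he //.
  - exfalso; exact: contra0 t2 h2 he.
  - exfalso; exact: contra0 t1 h1 (esym he).
  - case: (ltngtP t1 t2) => h.
    + exfalso; exact: contra2 h he.
    + exfalso; exact: contra2 h (esym he).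
    + by rewrite h.
move=> q; split.
  move/imsetP => [[[|t] ht] _ ->].
  - exists z0, 1; split => //; split => //.
    have := drun_nseq [::] 1 z0; rewrite /= => <-.
    by apply: drun_val; rewrite /wval.
  - exists z0, (totient k); split => //; split => //.
    rewrite -drun_nseq; apply: drun_big.
    + by rewrite wval_cat wval_nseq0 // bigl // wval_wz.
    + by rewrite wval_wz.
    + by rewrite wval_cat wval_nseq0 // addn0 size_nseq wval_wz -modnMml hmod ?Xw_dvd // modn_mod.
move=> [z [n [hz [hn hit]]]].
have [w hw] := min_reach hmin q; subst q.
case X0: (wval w == 0).
  apply/imsetP; exists ord0 => //.
  by apply: drun_val; rewrite (eqP X0).
set N := n * (p + m).
have hiter : forall j, iter (n * j) (fun x => ddelta x z) (drun M w) = drun M w.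
  elim => [|j IH]; first by rewrite muln0.
  by rewrite mulnS iterD IH hit.
have hW : drun M (w ++ nseq N z) = drun M w by rewrite drun_nseq hiter.
have hWv : wval (w ++ nseq N z) = wval w * b ^ N.
  by rewrite wval_cat wval_nseq0 // addn0 size_nseq.
have hNp : p <= N by rewrite /N; nia.
have hbig : m < wval w * b ^ N.
  have := ltn_expl N hb; have : m < N by rewrite /N; nia.
  move: X0 => /negbT; rewrite -lt0n; nia.
have gdiv : g %| (wval w * b ^ N) %% p.
  rewrite /dvdn modn_dvdm ?hpk ?dvdn_mulr // -/(dvdn g _).
  apply: dvdn_mull; apply: dvdn_trans hgb _; exact: dvdn_exp2l.
set r := (wval w * b ^ N) %% p in gdiv.
have ht : (r %/ g).+1 < k.+1.
  rewrite ltnS ltn_divLR // -(mulnC g) -hpk /r ltn_pmod //.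
apply/imsetP; exists (Ordinal ht) => //.
rewrite -hW; apply: drun_big.
- by rewrite hWv.
- by rewrite wval_wz.
- by rewrite hWv wval_wz Xw_mod ?divnK.
Qed.
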